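(* A tournament $G$ does not have a subtournament isomorphic to $D_4$ if and only if $G$ can be written as $T_n(I^1,\ldots,I^n)$ or as $I_2(T_n(I^1,\ldots,I^n), I)$, where $n \ge 1$ is odd, $I_2$ is taken with its standard ordering of vertices, and $I^1,\ldots,I^n,I$ are transitive tournaments.
   Context: A tournament is a finite, non-null, loopless directed graph in which for any two distinct vertices $u,v$ there is exactly one edge with both ends in $\{u,v\}$; write $u\to v$ for the edge from $u$ to $v$, and $X\Rightarrow Y$ if $x\to y$ for all $x\in X,y\in Y$. A subtournament is the tournament induced on a nonempty vertex subset. A tournament is transitive if its vertices can be ordered $v_1,\dots,v_n$ with $v_i\to v_j$ whenever $i<j$ (the standard ordering); $I_n$ denotes the transitive tournament on $n$ vertices. Substitution: given a tournament $G$ with an ordering $v_1,\dots,v_n$ of its vertices and tournaments $H_1,\dots,H_n$, $G(H_1,\dots,H_n)$ is a tournament whose vertex set is a disjoint union $V_1\cup\dots\cup V_n$, with $V_i\Rightarrow V_j$ whenever $v_i\to v_j$ and the subtournament on $V_i$ isomorphic to $H_i$. For $n=2k+1$, $T_n$ is the tournament on $v_1,\dots,v_n$ (ordered in this way for substitution) with $v_i\to v_j$ iff $j\equiv i+1,\dots,i+k \pmod n$. $D_4$ is the 4-vertex tournament consisting of a cyclic triangle $C$ and a vertex $v$ with $v\to c$ for every vertex $c$ of $C$. *)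

(* Defs.v *)
From mathcomp Require Import all_boot.
Set Implicit Arguments. Unset Strict Implicit. Unset Printing Implicit Defensive.

Definition is_tournament (V : finType) (e : rel V) : Prop :=
  0 < #|V| /\ (forall x, ~~ e x x) /\ (forall x y, x != y -> e x y != e y x).

Definition has_sub_iso (W V : finType) (eH : rel W) (eG : rel V) : Prop :=
  exists f : W -> V, injective f /\ forall x y, eG (f x) (f y) = eH x y.

(* D_4 on 'I_4: vertices 0,1,2 form the cyclic triangle 0->1->2->0,
   vertex 3 dominates them. *)
Definition d4 : rel 'I_4 := fun x y =>
  ((x == 3 :> nat) && (y != 3 :> nat)) ||
  [&& x < 3, y < 3 & (y == (x + 1) %% 3 :> nat)].

(* T_n on 'I_n (vertices v_1..v_n as 0..n-1): i -> j iff
   j = i+1, ..., i+k (mod n), with n = 2k+1. *)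
Definition tn (n : nat) : rel 'I_n := fun i j =>
  (0 < (j + n - i) %% n) && ((j + n - i) %% n <= n./2).

Definition transitive_on (V : finType) (e : rel V) (S : {set V}) : Prop :=
  exists s : seq V, [/\ uniq s, s =i S &
    forall (x0 : V) (i j : nat), i < j -> j < size s ->
      e (nth x0 s i) (nth x0 s j)].

(* The subtournament induced on S is T_n(I^1, ..., I^n) with transitive
   I^i: S splits into n nonempty parts V_1..V_n (f x = part of x) such that
   V_i => V_j whenever v_i -> v_j in T_n, and each part is transitive. *)
Definition Tn_subst (V : finType) (e : rel V) (S : {set V}) (n : nat) : Prop :=
  exists f : V -> 'I_n,
    [/\ forall i : 'I_n, exists2 x, x \in S & f x = i,
        forall i : 'I_n, transitive_on e [set x in S | f x == i] &
        forall x y, x \in S -> y \in S -> f x != f y ->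
          e x y = tn (f x) (f y)].

(* Main.v *)
Require Import Defs.
From mathcomp Require Import all_boot zify.
Set Implicit Arguments. Unset Strict Implicit. Unset Printing Implicit Defensive.

Definition tnN k i j := ((i < j) && (j - i <= k)) || ((j < i) && (k < i - j)).
Lemma tnE k (i j : 'I_(k.*2.+1)) : tn i j = tnN k i j.
Proof.
rewrite /tn /tnN.
have hn : (k.*2.+1)./2 = k by lia.
rewrite hn.
have hi := ltn_ord i; have hj := ltn_ord j.
case: (leqP i j) => hij.
  have -> : j + k.*2.+1 - i = (j - i) + k.*2.+1 by lia.
  rewrite modnDr modn_small; last by lia.
  by case: (ltngtP i j) => h; lia.
rewrite modn_small; last by lia.
case: (ltngtP i j) => h; lia.
Qed.

Ltac ifs := repeat (case: ifP => [/eqP ?|/negbT/eqP ?]).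

Section Tour.
Variable V : finType.
Variable e : rel V.
Hypothesis irr : forall x, ~~ e x x.
Hypothesis tot : forall x y, x != y -> e x y != e y x.

Lemma asym x y : e x y -> ~~ e y x.
Proof.
case: (eqVneq x y) => [->|nxy]; first by rewrite (negbTE (irr y)).
by move: (tot nxy); case: (e x y); case: (e y x).
Qed.

Lemma totl x y : x != y -> ~~ e x y -> e y x.
Proof. by move=> /tot; case: (e x y); case: (e y x). Qed.

Lemma neq_of x y : e x y -> x != y.
Proof. by move=> h; apply/eqP => exy; move: h; rewrite exy (negbTE (irr y)). Qed.

Definition cyc x y z := [&& e x y, e y z & e z x].
Definition notrans (S : {set V}) :=
  forall x y z, x \in S -> y \in S -> z \in S -> ~~ cyc x y z.

Lemma tr_notrans S : transitive_on e S -> notrans S.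
Proof.
case=> s [us hs hf] x y z xS yS zS; apply/negP => /and3P [exy eyz ezx].
have key : forall a b, a \in S -> b \in S -> e a b -> index a s < index b s.
  move=> a b aS bS eab; rewrite -hs in aS; rewrite -hs in bS.
  case: (ltngtP (index a s) (index b s)) => // h.
  - have := hf a _ _ h; rewrite index_mem => /(_ aS).
    by rewrite !nth_index // => /asym; rewrite eab.
  - have eab' : a = b by rewrite -(nth_index a aS) h nth_index.
    by move: (neq_of eab); rewrite eab' eqxx.
have := key _ _ xS yS exy; have := key _ _ yS zS eyz; have := key _ _ zS xS ezx.
lia.
Qed.

Lemma notrans_tr S : notrans S -> transitive_on e S.
Proof.
move=> hS.
pose le := fun x y => (x == y) || e x y.
have tle : total le.
  move=> x y; case: (eqVneq x y) => [->|nxy]; first by rewrite /le eqxx.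
  rewrite /le (negbTE nxy) eq_sym (negbTE nxy) /=.
  by move: (tot nxy); case: (e x y); case: (e y x).
exists (sort le (enum S)); split.
- by rewrite sort_uniq enum_uniq.
- by move=> x; rewrite mem_sort mem_enum.
move=> x0 i j lij ljs.
have hp : pairwise le (sort le (enum S)).
  rewrite -(sorted_pairwise_in (P := mem S)); first exact: sort_sorted.
    move=> y x z yS xS zS; rewrite /le.
    move=> /orP [/eqP->//|exy] /orP [/eqP<-|eyz]; first by rewrite exy orbT.
    case: (eqVneq x z) => [exz|nxz] /=.
      by move: eyz; rewrite -exz => /asym; rewrite exy.
    apply: contraT => nexz; have ezx := totl nxz nexz.
    by move: (hS _ _ _ xS yS zS); rewrite /cyc exy eyz ezx.
  by apply/allP => y; rewrite mem_sort mem_enum.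
move/(pairwiseP x0): hp => /(_ i j); rewrite !inE => /(_ (ltn_trans lij ljs) ljs lij).
rewrite /le nth_uniq ?(ltn_trans lij ljs) // ?sort_uniq ?enum_uniq //.
by rewrite (ltn_eqF lij).
Qed.

Lemma notrans_sub (S T : {set V}) : T \subset S -> notrans S -> notrans T.
Proof. by move=> /subsetP sub h x y z /sub xS /sub yS /sub zS; apply: h. Qed.

Lemma notrans_sink S : S != set0 -> notrans S ->
  exists2 z, z \in S & forall y, y \in S -> y != z -> e y z.
Proof.
move=> /set0Pn [a aS] /notrans_tr [s [us hs hf]].
have ss : 0 < size s by case: s hs {us hf} => // /(_ a); rewrite aS.
exists (nth a s (size s).-1); first by rewrite -hs mem_nth // prednK.
move=> y yS ny; rewrite -hs in yS; rewrite -(nth_index a yS); apply: hf; last by rewrite prednK.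
have : index y s < size s by rewrite index_mem.
have : index y s != (size s).-1.
  by apply: contraNneq ny => <-; rewrite nth_index.
lia.
Qed.


Definition D4free (S : {set V}) :=
  forall w x y z, w \in S -> x \in S -> y \in S -> z \in S ->
    e w x -> e w y -> e w z -> ~~ cyc x y z.

Definition nosink (S : {set V}) := forall z, z \in S -> exists2 w, w \in S & e z w.

Lemma claimA S : D4free S -> nosink S ->
  forall v a b c, v \in S -> a \in S -> b \in S -> c \in S ->
    e a v -> e b v -> e c v -> ~~ cyc a b c.
Proof.
move=> hD hN v a b c vS aS bS cS eav ebv ecv; apply/negP => habc.
have /and3P [eab ebc eca] := habc.
pose U := [set u in S | [&& e a u, e b u & e c u]].
have step : forall p q u w : V, p \in S -> q \in S -> u \in S -> w \in S ->
    e p q -> e p u -> e q u -> e u w -> e p w -> e q w.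
  move=> p q u w pS qS uS wS epq epu equ euw epw; case: (boolP (e q w)) => // nqw.
  have nwq : q != w by apply: contraNneq (asym euw) => <-.
  have ewq := totl nwq nqw.
  by move: (hD _ _ _ _ pS qS uS wS epq epu epw); rewrite /cyc equ euw ewq.
have clos : forall u w, u \in U -> w \in S -> e u w -> w \in U.
  move=> u w; rewrite inE => /andP [uS /and3P [eau ebu ecu]] wS euw.
  have h1 : e a w -> e b w := step a b u w aS bS uS wS eab eau ebu euw.
  have h2 : e b w -> e c w := step b c u w bS cS uS wS ebc ebu ecu euw.
  have h3 : e c w -> e a w := step c a u w cS aS uS wS eca ecu eau euw.
  have : e a w || e b w || e c w.
    case: (boolP (e a w || e b w || e c w)) => // /norP [/norP [naw nbw] ncw].
    have nwa : a != w by apply: contraNneq (asym eau) => ->.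
    have nwb : b != w by apply: contraNneq (asym ebu) => ->.
    have nwc : c != w by apply: contraNneq (asym ecu) => ->.
    by move: (hD _ _ _ _ wS aS bS cS (totl nwa naw) (totl nwb nbw) (totl nwc ncw)); rewrite habc.
  rewrite inE wS /= => /orP [/orP [haw|hbw]|hcw].
  - by rewrite haw h1 // h2 // h1.
  - by rewrite hbw h2 // h3 // h2.
  - by rewrite hcw h3 // h1 // h3.
have Un : U != set0 by apply/set0Pn; exists v; rewrite inE vS eav ebv ecv.
have Ut : notrans U.
  move=> x y z; rewrite !inE => /andP [xS /and3P [eax _ _]] /andP [yS /and3P [eay _ _]]
    /andP [zS /and3P [eaz _ _]].
  exact: (hD a x y z aS xS yS zS eax eay eaz).
have [z zU hz] := notrans_sink Un Ut.
have zS : z \in S by move: zU; rewrite inE => /andP [].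
have [w wS ezw] := hN z zS.
have wU := clos _ _ zU wS ezw.
have nwz : w != z by rewrite eq_sym (neq_of ezw).
by move: (hz w wU nwz) => /asym; rewrite ezw.
Qed.

Section Strong.
Variable S : {set V}.
Variable x0 : V.
Hypothesis x0S : x0 \in S.
Hypothesis hD : D4free S.
Hypothesis hN : nosink S.

Definition C := [set y in S | e x0 y].
Definition B := [set y in S | e y x0].

Variable s : seq V.
Hypothesis us : uniq s.
Hypothesis hs : s =i B.
Hypothesis hf : forall (x1 : V) (i j : nat), i < j -> j < size s ->
      e (nth x1 s i) (nth x1 s j).

Lemma memC y : (y \in C) = (y \in S) && e x0 y. Proof. by rewrite inE. Qed.
Lemma memB y : (y \in B) = (y \in S) && e y x0. Proof. by rewrite inE. Qed.

Lemma notransC : notrans C.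
Proof.
move=> x y z; rewrite !memC => /andP [xS ex] /andP [yS ey] /andP [zS ez].
exact: (hD x0S xS yS zS ex ey ez).
Qed.

Lemma notransB : notrans B.
Proof.
move=> x y z; rewrite !memB => /andP [xS ex] /andP [yS ey] /andP [zS ez].
exact: (claimA hD hN x0S xS yS zS ex ey ez).
Qed.

Lemma sizeB : size s = #|B|.
Proof. by rewrite -(card_uniqP us); apply: eq_card. Qed.

Lemma idx b b' : b \in B -> b' \in B -> e b b' = (index b s < index b' s).
Proof.
rewrite -!hs => bs b's.
case: (ltngtP (index b s) (index b' s)) => h.
- by have := hf b h; rewrite index_mem !nth_index // => ->.
- have := hf b h; rewrite index_mem !nth_index // => /(_ bs) /asym.
  by move/negbTE.
- have -> : b = b' by rewrite -(nth_index b bs) h nth_index.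
  exact/negbTE/irr.
Qed.

Lemma CB_neq c b : c \in C -> b \in B -> c != b.
Proof.
rewrite memC memB => /andP [_ ec] /andP [_ eb].
by apply: contraTneq ec => ->; apply: asym.
Qed.

Lemma stair_down c b b' : c \in C -> b \in B -> b' \in B -> e c b' -> e b b' -> e c b.
Proof.
move=> cC bB b'B ecb' ebb'.
case: (boolP (e c b)) => // ncb.
have ebc := totl (CB_neq cC bB) ncb.
move: (cC) (bB) (b'B); rewrite memC !memB => /andP [cS e0c] /andP [bS eb0] /andP [b'S eb'0].
by move: (hD bS x0S cS b'S eb0 ebc ebb'); rewrite /cyc e0c ecb' eb'0.
Qed.

Definition phi c := #|[set b in B | e c b]|.

Lemma phi_le c : phi c <= size s.
Proof.
rewrite sizeB; apply: subset_leq_card; apply/subsetP => b; rewrite inE => /andP [].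
by [].
Qed.

Lemma stair c b : c \in C -> b \in B -> e c b = (index b s < phi c).
Proof.
move=> cC bB.
set D := [set b in B | e c b].
set p := phi c.
pose I := [set y | y \in take p s].
have cI : #|I| = p.
  rewrite cardsE (card_uniqP _); last by rewrite take_uniq.
  by rewrite size_takel // phi_le.
have memI y : y \in B -> (y \in I) = (index y s < p).
  by move=> yB; rewrite inE in_take // hs.
have DI : D = I.
  have hsub : D \subset I.
    apply/subsetP => y yD; have yB : y \in B by move: yD; rewrite inE => /andP [].
    rewrite memI //; case: ltnP => // hp.
    have IsubD : I \subset D.
      apply/subsetP => z zI.
      have zB : z \in B by move: zI; rewrite inE => /mem_take; rewrite hs.
      rewrite inE zB /=.
      move: yD; rewrite inE => /andP [_ ecy].
      apply: (stair_down cC zB yB ecy).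
      by rewrite idx //; rewrite memI // in zI; apply: leq_trans zI hp.
    have : I \proper D.
      rewrite properEneq IsubD andbT; apply/eqP => hID.
      by move: yD; rewrite -hID memI // ltnNge hp.
    by move/proper_card; rewrite cI /p /phi ltnn.
  by apply/eqP; rewrite eqEcard hsub cI /p /phi leqnn.
have : (b \in D) = (b \in I) by rewrite DI.
by rewrite memI // inE bB.
Qed.

Lemma phi_mono c c' : c \in C -> c' \in C -> e c c' -> phi c <= phi c'.
Proof.
move=> cC c'C ecc'; apply: subset_leq_card; apply/subsetP => b.
rewrite !inE => /andP [bB ecb]; rewrite bB /=.
have {}bB : b \in B by rewrite memB.
case: (boolP (e c' b)) => // nc'b.
have ebc' := totl (CB_neq c'C bB) nc'b.
move: (cC) (c'C) (bB); rewrite !memC memB => /andP [cS e0c] /andP [c'S e0c'] /andP [bS eb0].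
by move: (claimA hD hN c'S x0S cS bS e0c' ecc' ebc'); rewrite /cyc e0c ecb eb0.
Qed.

Definition inPhi x := (0 < x) && [exists c in C, phi c == x].
Definition r x := count inPhi (iota 1 x).
Definition k := r (size s).

Lemma rS x : r x.+1 = r x + inPhi x.+1.
Proof.
rewrite /r; have := iotaD 1 x 1; rewrite addn1 add1n => ->.
by rewrite count_cat /= addn0.
Qed.

Lemma r0 : r 0 = 0. Proof. by []. Qed.

Lemma r_mono x y : x <= y -> r x <= r y.
Proof.
move=> /subnKC <-; elim: (y - x) => [|d IH]; first by rewrite addn0.
by rewrite addnS rS (leq_trans IH) // leq_addr.
Qed.

Lemma inPhi_le x : inPhi x -> x <= size s.
Proof. by case/andP => _ /existsP [c /andP [_ /eqP <-]]; apply: phi_le. Qed.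

Lemma r_lt p x : inPhi p -> (x < p) = (r x < r p).
Proof.
move=> hp; case: (ltnP x p) => hxp.
  have hp1 : p = p.-1.+1 by case/andP: hp => h _; rewrite prednK.
  have := r_mono (x := x) (y := p.-1); rewrite hp1 rS -hp1 hp.
  move=> /(_ _); have : x <= p.-1 by lia.
  move=> h /(_ h); lia.
by apply/esym/negbTE; rewrite -leqNgt; apply: r_mono.
Qed.

Lemma r_surj t : 0 < t <= k -> exists2 p, inPhi p & r p = t.
Proof.
case/andP => t0 tk.
have exP : exists x, t <= r x by exists (size s).
case: (ex_minnP exP) => x hx hmin.
have x0' : 0 < x by case: x hx hmin => //; rewrite r0; lia.
have hx1 : x = x.-1.+1 by rewrite prednK.
have hlt : r x.-1 < t.
  rewrite ltnNge; apply/negP => /hmin; lia.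
move: hx; rewrite hx1 rS => hx.
have hi : inPhi x.-1.+1.
  by apply: contraLR hx; rewrite -ltnNge => /negbTE ->; rewrite addn0.
exists x.-1.+1 => //.
rewrite rS hi; move: hx; rewrite hi; lia.
Qed.

Definition tau c := r (phi c).
Definition rho b := r (index b s).

Lemma tau_le c : tau c <= k.
Proof. exact: r_mono (phi_le c). Qed.

Lemma rho_le b : rho b <= k.
Proof. by apply: r_mono; apply: index_size. Qed.

Lemma ecb c b : c \in C -> b \in B -> e c b = (rho b < tau c).
Proof.
move=> cC bB; rewrite stair //.
case: (posnP (phi c)) => hp.
  by rewrite /tau hp r0 ltn0.
apply: r_lt; rewrite /inPhi hp /=; apply/existsP; exists c; by rewrite cC eqxx.
Qed.

Lemma tau_mono c c' : c \in C -> c' \in C -> e c c' -> tau c <= tau c'.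
Proof. by move=> cC c'C h; apply: r_mono; apply: phi_mono. Qed.

Lemma rho_mono b b' : b \in B -> b' \in B -> e b b' -> rho b <= rho b'.
Proof. by move=> bB b'B; rewrite idx // => h; apply: r_mono; apply: ltnW. Qed.

Lemma exC t : 0 < t <= k -> exists2 c, c \in C & tau c = t.
Proof.
move=> /r_surj [p /[dup] hp /andP [_ /existsP [c /andP [cC /eqP hc]]] hr].
by exists c => //; rewrite /tau hc.
Qed.

Lemma exB t : t < k -> exists2 b, b \in B & rho b = t.
Proof.
move=> htk; have : 0 < t.+1 <= k by rewrite ltn0Sn htk.
move=> /r_surj [p hp hr].
have p0 : 0 < p by case/andP: hp.
have psz := inPhi_le hp.
have hp1 : p = p.-1.+1 by rewrite prednK.
have ps : p.-1 < size s by lia.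
exists (nth x0 s p.-1); first by rewrite -hs mem_nth.
rewrite /rho index_uniq //.
move: hr; rewrite hp1 rS -hp1 hp; lia.
Qed.

Lemma classify v : v \in S -> [\/ v = x0, v \in C | v \in B].
Proof.
move=> vS; case: (eqVneq v x0) => [->|nv]; first by constructor 1.
case: (boolP (e x0 v)) => h; first by constructor 2; rewrite memC vS h.
by constructor 3; rewrite memB vS (totl _ h) // eq_sym.
Qed.

Lemma x0C : x0 \notin C. Proof. by rewrite memC (negbTE (irr x0)) andbF. Qed.
Lemma x0B : x0 \notin B. Proof. by rewrite memB (negbTE (irr x0)) andbF. Qed.
Lemma CnB c : c \in C -> c \notin B.
Proof.
rewrite memC memB => /andP [_ h]; apply/negP => /andP [_ h'].
by move: (asym h); rewrite h'.
Qed.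

Definition fv v := if v == x0 then 0 else if v \in C then tau v
  else if rho v == k then 0 else k + 1 + rho v.

Lemma fv_x0 : fv x0 = 0. Proof. by rewrite /fv eqxx. Qed.
Lemma fv_C c : c \in C -> fv c = tau c.
Proof.
move=> cC; rewrite /fv cC; case: eqP => // ec.
by move: x0C; rewrite -ec cC.
Qed.
Lemma fv_B b : b \in B -> fv b = if rho b == k then 0 else k + 1 + rho b.
Proof.
move=> bB; rewrite /fv; case: eqP => [ec|_]; first by move: x0B; rewrite -ec bB.
by rewrite ifF //; apply/negP => cC; move: (CnB cC); rewrite bB.
Qed.

Lemma fv_le v : fv v <= k.*2.
Proof.
rewrite /fv; have := tau_le v; have := rho_le v.
case: eqP => _; first lia. case: (v \in C); first lia.
case: eqP; lia.
Qed.

Lemma key x y : x \in S -> y \in S -> fv x != fv y -> e x y -> tnN k (fv x) (fv y).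
Proof.
move=> xS yS; rewrite /tnN.
have nBx0 b : b \in B -> e x0 b = false.
  by rewrite memB => /andP [_ h]; apply/negbTE/asym.
have nCx0 c : c \in C -> e c x0 = false.
  by rewrite memC => /andP [_ h]; apply/negbTE/asym.
case: (classify xS) => [->|xC|xB]; case: (classify yS) => [->|yC|yB].
- by rewrite eqxx.
- by rewrite fv_x0 fv_C // => h _; have := tau_le y; move: h; lia.
- by rewrite nBx0.
- by rewrite nCx0.
- rewrite !fv_C // => h /(tau_mono xC yC); have := tau_le y; move: h; lia.
- rewrite fv_C // fv_B // => h; rewrite ecb //; have := tau_le x; have := rho_le y.
  move: h; ifs; lia.
- rewrite fv_B // fv_x0 => h _; have := rho_le x; move: h; ifs; lia.
- rewrite fv_B // fv_C // => h exy.
  have : ~~ e y x by apply: asym.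
  rewrite ecb // -leqNgt; have := tau_le y; have := rho_le x; move: h; ifs; lia.
- rewrite !fv_B // => h /(rho_mono xB yB); have := rho_le x; have := rho_le y.
  move: h; ifs; lia.
Qed.

Lemma tnN_asym i j : tnN k i j -> ~~ tnN k j i.
Proof. rewrite /tnN; lia. Qed.

Definition lev v := if v \in B then 0 else if v == x0 then 1 else 2.

Lemma lev_x0 : lev x0 = 1. Proof. by rewrite /lev (negbTE x0B) eqxx. Qed.
Lemma lev_C c : c \in C -> lev c = 2.
Proof.
move=> cC; rewrite /lev (negbTE (CnB cC)) ifF //.
by apply/negP => /eqP ec; move: x0C; rewrite -ec cC.
Qed.
Lemma lev_B b : b \in B -> lev b = 0. Proof. by move=> bB; rewrite /lev bB. Qed.

Lemma lev_mono x y : x \in S -> y \in S -> fv x = fv y -> e x y -> lev x <= lev y.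
Proof.
move=> xS yS.
have nBx0 b : b \in B -> e x0 b = false.
  by rewrite memB => /andP [_ h]; apply/negbTE/asym.
have nCx0 c : c \in C -> e c x0 = false.
  by rewrite memC => /andP [_ h]; apply/negbTE/asym.
case: (classify xS) => [->|xC|xB]; last by rewrite lev_B.
  case: (classify yS) => [->|yC|yB]; first by rewrite lev_x0.
  - by rewrite lev_x0 lev_C.
  - by rewrite nBx0.
case: (classify yS) => [->|yC|yB]; first by rewrite nCx0.
- by rewrite !lev_C.
- rewrite fv_C // fv_B // ecb // => h; have := tau_le x; move: h; ifs; lia.
Qed.


Lemma fvK v : (inord (fv v) : 'I_(k.*2.+1)) = fv v :> nat.
Proof. by rewrite inordK // ltnS fv_le. Qed.

Lemma lev0 v : lev v = 0 -> v \in B.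
Proof. by rewrite /lev; case: (v \in B) => //; case: (v == x0). Qed.
Lemma lev1 v : lev v = 1 -> v = x0.
Proof. by rewrite /lev; case: (v \in B) => //; case: eqP. Qed.
Lemma lev2 v : v \in S -> lev v = 2 -> v \in C.
Proof.
move=> vS; rewrite /lev; case: (classify vS) => [->|//|->//].
by rewrite (negbTE x0B) eqxx.
Qed.

Lemma strong_Tn : Tn_subst e S (k.*2.+1).
Proof.
exists (fun v => inord (fv v)); split.
- move=> i; have hi := ltn_ord i.
  have fin : forall x, fv x = i -> (inord (fv x) : 'I_(k.*2.+1)) = i.
    by move=> x hx; apply: val_inj; rewrite /= fvK.
  case: (posnP i) => [i0|ip].
    by exists x0 => //; apply: fin; rewrite fv_x0 i0.
  case: (leqP i k) => hik.
    have [c cC hc] : exists2 c, c \in C & tau c = i by apply: exC; rewrite ip hik.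
    exists c; first by move: cC; rewrite memC => /andP [].
    by apply: fin; rewrite fv_C.
  have [b bB hb] : exists2 b, b \in B & rho b = i - k - 1 by apply: exB; lia.
  exists b; first by move: bB; rewrite memB => /andP [].
  apply: fin; rewrite fv_B // hb; case: eqP; lia.
- move=> i; apply: notrans_tr => x y z; rewrite !inE.
  move=> /andP [xS /eqP hx] /andP [yS /eqP hy] /andP [zS /eqP hz].
  have fxy : fv x = fv y by rewrite -fvK hx -hy fvK.
  have fyz : fv y = fv z by rewrite -fvK hy -hz fvK.
  apply/negP => /and3P [exy eyz ezx].
  have l1 := lev_mono xS yS fxy exy.
  have l2 := lev_mono yS zS fyz eyz.
  have l3 := lev_mono zS xS (esym (etrans fxy fyz)) ezx.
  have : lev x <= 2 by rewrite /lev; case: (_ \in _) => //; case: (_ == _).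
  move=> h2; case: (ltngtP (lev x) 1) => lx.
  + have {}lx : lev x = 0 by lia.
    have ly : lev y = 0 by lia. have lz : lev z = 0 by lia.
    by move: (notransB (lev0 lx) (lev0 ly) (lev0 lz)); rewrite /cyc exy eyz ezx.
  + have {}lx : lev x = 2 by lia.
    have ly : lev y = 2 by lia. have lz : lev z = 2 by lia.
    by move: (notransC (lev2 xS lx) (lev2 yS ly) (lev2 zS lz)); rewrite /cyc exy eyz ezx.
  + have ly : lev y = 1 by lia.
    by move: exy; rewrite (lev1 lx) (lev1 ly) (negbTE (irr x0)).
- move=> x y xS yS hne; rewrite tnE !fvK.
  have hne' : fv x != fv y by by apply: contraNneq hne => ->.
  case: (boolP (e x y)) => [h|h]; first by rewrite key.
  have nxy : x != y by apply: contraNneq hne' => ->.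
  have := key yS xS _ (totl nxy h); rewrite eq_sym => /(_ hne') /tnN_asym.
  by move/negbTE.
Qed.

End Strong.

Lemma strong_case (S : {set V}) x0 : x0 \in S -> D4free S -> nosink S ->
  exists n, [/\ odd n, 1 <= n & Tn_subst e S n].
Proof.
move=> x0S hD hN.
have /notrans_tr [s [us hs hf]] := notransB x0S hD hN.
exists (k S x0 s).*2.+1; split => //; first by rewrite /= odd_double.
exact: strong_Tn.
Qed.

Definition form1 (S : {set V}) := exists n, [/\ odd n, 1 <= n & Tn_subst e S n].
Definition form2 (S : {set V}) := exists n (A B : {set V}),
  [/\ odd n, 1 <= n, A :&: B = set0, A :|: B = S &
   [/\ B != set0, forall x y, x \in A -> y \in B -> e x y,
       Tn_subst e A n & transitive_on e B]].

Lemma D4free_sub (S T : {set V}) : T \subset S -> D4free S -> D4free T.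
Proof. by move=> /subsetP sub h w x y z /sub wS /sub xS /sub yS /sub zS; apply: h. Qed.

Lemma main N (S : {set V}) : #|S| <= N -> S != set0 -> D4free S -> form1 S \/ form2 S.
Proof.
elim: N S => [|N IH] S hc hn hD.
  by move: hn; rewrite -card_gt0; lia.
case: (boolP [exists v in S, [forall u in S, (u != v) ==> e u v]]) =>
  [/existsP [v /andP [vS /forallP hv]]|hns].
  have hv' u : u \in S -> u != v -> e u v.
    by move=> uS nuv; move: (hv u); rewrite uS nuv.
  have nout u : u \in S -> ~~ e v u.
    move=> uS; case: (eqVneq u v) => [->|nuv]; first exact: irr.
    exact: asym (hv' u uS nuv).
  case: (boolP (S :\ v == set0)) => [/eqP hS1|hS1].
    have onlyv u : u \in S -> u = v.
      move=> uS; apply/eqP; apply: contraT => nuv.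
      have : u \in S :\ v by rewrite in_setD1 nuv uS.
      by rewrite hS1 inE.
    left; exists 1; split => //; exists (fun _ => ord0); split.
    - by move=> i; exists v => //; rewrite (ord1 i).
    - move=> i; apply: notrans_tr => x y z; rewrite !inE => /andP [xS _] /andP [yS _] _.
      by rewrite /cyc (onlyv x xS) (onlyv y yS) (negbTE (irr v)).
    - by move=> x y _ _; rewrite eqxx.
  have card : #|S :\ v| <= N by move: hc; rewrite (cardsD1 v S) vS add1n.
  have hD' : D4free (S :\ v) by apply: D4free_sub hD; apply: subsetDl.
  case: (IH _ card hS1 hD') => [[n [hodd hn1 hT]]|[n [A [B0 [hodd hn1 hAB hAUB [hBn hAB' hTA htB]]]]]].
    right; exists n, (S :\ v), [set v]; split => //.
    - by apply/setP => u; rewrite !inE; case: (eqVneq u v); rewrite ?andbF ?andbT.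
    - by apply/setP => u; rewrite !inE; case: (eqVneq u v) => [->|]; rewrite ?vS ?orbT ?orbF.
    split => //.
    - by apply/set0Pn; exists v; rewrite inE.
    - by move=> x y; rewrite !inE => /andP [nxv xS] /eqP ->; exact: hv'.
    - apply: notrans_tr => x y z; rewrite !inE => /eqP -> /eqP -> /eqP ->.
      by rewrite /cyc (negbTE (irr v)).
  have memS u : (u \in S :\ v) = (u \in A) || (u \in B0) by rewrite -hAUB inE.
  have disj u : u \in A -> u \in B0 -> False.
    move=> uA uB; have : u \in A :&: B0 by rewrite inE uA uB.
    by rewrite hAB inE.
  right; exists n, A, (v |: B0); split => //.
  - apply/setP => u; rewrite !inE; case: (eqVneq u v) => [->|nuv] /=.
      have : (v \in S :\ v) = false by rewrite in_setD1 eqxx.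
      by rewrite memS => /norP [/negbTE -> _].
    by case uA: (u \in A) => //=; case uB: (u \in B0) => //; exfalso; exact: disj uA uB.
  - apply/setP => u; rewrite !inE; case: (eqVneq u v) => [->|nuv] /=.
      by rewrite orbT vS.
    by have := memS u; rewrite in_setD1 nuv /= => <-.
  split => //.
  - by apply/set0Pn; exists v; rewrite !inE eqxx.
  - move=> x y xA; rewrite in_setU1 => /orP [/eqP ->|yB]; last exact: hAB'.
    have : x \in S :\ v by rewrite memS xA.
    by rewrite in_setD1 => /andP [nxv xS]; exact: hv'.
  - have ntB := tr_notrans htB.
    have inS u : u \in v |: B0 -> u \in S.
      rewrite in_setU1 => /orP [/eqP ->//|uB].
      have : u \in S :\ v by rewrite memS uB orbT.
      by rewrite in_setD1 => /andP [].
    apply: notrans_tr => x y z hx hy hz; apply/negP => /and3P [exy eyz ezx].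
    case: (eqVneq x v) => [xv|nxv]; first by move: (nout y (inS y hy)); rewrite -xv exy.
    case: (eqVneq y v) => [yv|nyv]; first by move: (nout z (inS z hz)); rewrite -yv eyz.
    case: (eqVneq z v) => [zv|nzv]; first by move: (nout x (inS x hx)); rewrite -zv ezx.
    move: hx hy hz; rewrite !inE (negbTE nxv) (negbTE nyv) (negbTE nzv) /= => hx hy hz.
    by move: (ntB x y z hx hy hz); rewrite /cyc exy eyz ezx.
have hN : nosink S.
  move=> z zS; move: hns => /existsPn /(_ z); rewrite zS /= => /forallPn [u].
  rewrite negb_imply => /andP [uS]; rewrite negb_imply => /andP [nuz neuz].
  by exists u => //; apply: totl => //; rewrite eq_sym.
have [x0 x0S] : exists x, x \in S by apply/set0Pn.
by left; apply: strong_case x0S hD hN.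
Qed.

Definition offn n a b := if a <= b then b - a else b + n - a.
Lemma L_a n k a b : n = k.*2.+1 -> a < n -> b < n -> tnN k a b -> offn n a b <= k.
Proof.
move=> hn ha hb; rewrite /tnN /offn => /orP [/andP [h1 h2]|/andP [h1 h2]].
  rewrite ifT; lia.
rewrite ifF; lia.
Qed.
Lemma L_b n k a b c : n = k.*2.+1 -> a < n -> b < n -> c < n -> tnN k b c ->
  offn n a b <= k -> offn n a c <= k -> offn n a b <= offn n a c.
Proof.
move=> hn ha hb hc; rewrite /tnN /offn => /orP [/andP [h1 h2]|/andP [h1 h2]];
case: (leqP a b) => h3; case: (leqP a c) => h4; lia.
Qed.
Lemma L_c n a b c : a < n -> b < n -> c < n -> offn n a b = offn n a c -> b = c.
Proof.
move=> ha hb hc; rewrite /offn; case: (leqP a b) => h3; case: (leqP a c) => h4; lia.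
Qed.

Lemma tnE' n (i j : 'I_n) : odd n -> tn i j = tnN n./2 i j.
Proof.
move=> hodd; rewrite /tn /tnN; have hn : n = (n./2).*2.+1 by lia.
move: (n./2) hn => k hn.
have hi := ltn_ord i; have hj := ltn_ord j.
case: (leqP i j) => hij.
  have -> : j + n - i = (j - i) + n by lia.
  rewrite modnDr modn_small; last by lia.
  by case: (ltngtP i j) => h; lia.
rewrite modn_small; last by lia.
case: (ltngtP i j) => h; lia.
Qed.

Lemma easy_A (A : {set V}) n : odd n -> Tn_subst e A n ->
  forall d x y z, d \in A -> x \in A -> y \in A -> z \in A ->
  e d x -> e d y -> e d z -> ~~ cyc x y z.
Proof.
move=> hodd [f [_ hpart hcross]] d x y z dA xA yA zA edx edy edz.
have hn : n = (n./2).*2.+1 by lia.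
pose off (u : V) := offn n (f d) (f u).
have hfn u : f u < n := ltn_ord (f u).
have offk u : u \in A -> e d u -> off u <= n./2.
  move=> uA edu; rewrite /off; case: (eqVneq (f d) (f u)) => [->|hne].
    by rewrite /offn leqnn subnn.
  have := hcross d u dA uA hne; rewrite edu tnE' // => /esym.
  exact: L_a.
have mono u w : u \in A -> w \in A -> e d u -> e d w -> e u w -> off u <= off w.
  move=> uA wA edu edw euw; have := offk u uA edu; have := offk w wA edw.
  rewrite /off; case: (eqVneq (f u) (f w)) => [->|hne]; first by [].
  have := hcross u w uA wA hne; rewrite euw tnE' // => /esym h h1 h2.
  exact: L_b h h2 h1.
apply/negP => /and3P [exy eyz ezx].
have o1 := mono x y xA yA edx edy exy.
have o2 := mono y z yA zA edy edz eyz.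
have o3 := mono z x zA xA edz edx ezx.
have feq u w : off u = off w -> f u = f w.
  by move=> h; apply: val_inj; apply: (L_c _ _ _ h).
have fxy : f x = f y by apply: feq; lia.
have fxz : f x = f z by apply: feq; lia.
have := tr_notrans (hpart (f x)).
move=> /(_ x y z); rewrite !inE xA yA zA -fxy -fxz eqxx => /(_ isT isT isT).
by rewrite /cyc exy eyz ezx.
Qed.

Lemma easy_B (A B : {set V}) n : odd n -> A :&: B = set0 -> A :|: B = [set: V] ->
  (forall x y, x \in A -> y \in B -> e x y) -> Tn_subst e A n -> transitive_on e B ->
  forall d x y z, e d x -> e d y -> e d z -> ~~ cyc x y z.
Proof.
move=> hodd hAB hAUB hAB' hTA htB d x y z edx edy edz.
have inAB u : (u \in A) || (u \in B) by rewrite -in_setU hAUB inE.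
have noBA u w : u \in B -> w \in A -> ~~ e u w.
  by move=> uB wA; apply: asym; apply: hAB'.
apply/negP => /and3P [exy eyz ezx].
case/orP: (inAB x) => xA; last first.
  have yB : y \in B by case/orP: (inAB y) => // yA; move: (noBA _ _ xA yA); rewrite exy.
  have zB : z \in B by case/orP: (inAB z) => // zA; move: (noBA _ _ yB zA); rewrite eyz.
  by move: (tr_notrans htB xA yB zB); rewrite /cyc exy eyz ezx.
have zA : z \in A by case/orP: (inAB z) => // zB; move: (noBA _ _ zB xA); rewrite ezx.
have yA : y \in A by case/orP: (inAB y) => // yB; move: (noBA _ _ yB zA); rewrite eyz.
have dA : d \in A by case/orP: (inAB d) => // dB; move: (noBA _ _ dB xA); rewrite edx.
by move: (easy_A hodd hTA dA xA yA zA edx edy edz); rewrite /cyc exy eyz ezx.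
Qed.

Lemma iso_cyc : has_sub_iso d4 e -> exists w x y z, [/\ e w x, e w y, e w z & cyc x y z].
Proof.
case=> f [_ hf].
exists (f (@Ordinal 4 3 isT)), (f (@Ordinal 4 0 isT)), (f (@Ordinal 4 1 isT)), (f (@Ordinal 4 2 isT)).
by rewrite /cyc !hf.
Qed.

Lemma cyc_iso w x y z : e w x -> e w y -> e w z -> cyc x y z -> has_sub_iso d4 e.
Proof.
move=> ewx ewy ewz /and3P [exy eyz ezx].
pose f (i : 'I_4) := nth w [:: x; y; z; w] i.
have hf : forall i j, e (f i) (f j) = d4 i j.
  have r1 := negbTE (asym ewx). have r2 := negbTE (asym ewy). have r3 := negbTE (asym ewz).
  have r4 := negbTE (asym exy). have r5 := negbTE (asym eyz). have r6 := negbTE (asym ezx).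
  by move=> [[|[|[|[|i]]]] hi] [[|[|[|[|j]]]] hj] //=; rewrite /f /= ?(negbTE (irr _)).
exists f; split => // i j hij.
apply/eqP; apply: contraT => nij.
have : d4 i j || d4 j i.
  by move: i j nij {hij} => [[|[|[|[|i]]]] hi] [[|[|[|[|j]]]] hj].
by rewrite -!hf hij (negbTE (irr _)).
Qed.

End Tour.

Theorem corollary3p9 (V : finType) (e : rel V) (hT : is_tournament e) :
  ~ has_sub_iso d4 e <->
  (exists n : nat, [/\ odd n, 1 <= n & Tn_subst e [set: V] n]) \/
  (exists (n : nat) (A B : {set V}),
     [/\ odd n, 1 <= n, A :&: B = set0, A :|: B = [set: V] &
         [/\ B != set0, forall x y, x \in A -> y \in B -> e x y,
             Tn_subst e A n & transitive_on e B]]).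
Proof.
case: hT => hV [irr tot]; split.
- move=> nH.
  have hD : D4free e [set: V].
    move=> w x y z _ _ _ _ ewx ewy ewz; apply/negP => hc; apply: nH.
    exact: (cyc_iso irr tot ewx ewy ewz hc).
  have hn : [set: V] != set0 by rewrite -card_gt0 cardsT.
  exact: (main irr tot (leqnn _) hn hD).
- move=> H hs; have [w [x [y [z [ewx ewy ewz hc]]]]] := iso_cyc hs.
  case: H => [[n [hodd _ hT]]|[n [A [B [hodd _ hAB hAUB [_ hAB' hTA htB]]]]]].
    by move: (easy_A irr tot hodd hT (in_setT w) (in_setT x) (in_setT y) (in_setT z) ewx ewy ewz); rewrite hc.
  by move: (easy_B irr tot hodd hAB hAUB hAB' hTA htB ewx ewy ewz); rewrite hc.
Qed.
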